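(* Let $g\ge0$, $n\ge1$, $G\in\mathbb{G}_{g,n}$, and let $T_1,\dots,T_k$ be rational tails of $G$. If $H$ is a connected vertex-induced subgraph of $G$ with $V(H)\subseteq\bigcup_{i=1}^kV(T_i)$, then either $H\subseteq T_i$ for some $i$, or $V(G)=V(T_\ell)\cup V(T_r)$ for some $\ell,r$.
   Context: $\mathbb{G}_{g,n}$ is the set of isomorphism classes of dual graphs of stable $n$-pointed curves of genus $g$: connected graphs with vertex genera and $n$ labelled legs, of total genus $g$, each vertex stable. A vertex-induced subgraph is determined by a vertex set and contains all edges with both ends in that set and all legs rooted there. A tail is a connected vertex-induced subgraph joined to its complement by exactly one edge; a rational tail is a tail of genus $0$ (a tree all of whose vertices have genus $0$). *)

(* Defs.v *)
From mathcomp Require Import all_boot.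
Set Implicit Arguments. Unset Strict Implicit. Unset Printing Implicit Defensive.

(* A dual graph of an n-pointed curve, represented concretely:
   - V : finite type of vertices, E : finite type of edges;
   - gen v : genus of vertex v;
   - ends e : the two endpoints of edge e (loops allowed: ends e = (v,v);
     multiple edges allowed);
   - leg i : the vertex at which the leg labelled i (i < n) is rooted.
   An isomorphism class in G_{g,n} is represented by any of its members;
   all notions below are isomorphism invariant. *)

Section StableGraphs.
Variables (n : nat) (V E : finType).
Variables (gen : V -> nat) (ends : E -> V * V) (leg : 'I_n -> V).

Definition edge_in (S : {set V}) (e : E) : bool :=
  ((ends e).1 \in S) && ((ends e).2 \in S).

Definition adj_in (S : {set V}) : rel V :=
  fun x y => [&& x \in S, y \in S &
    [exists e : E, (ends e == (x, y)) || (ends e == (y, x))]].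

Definition connected_in (S : {set V}) : bool :=
  (S != set0) && [forall x in S, forall y in S, connect (adj_in S) x y].

Definition nedges_in (S : {set V}) : nat := #|[set e : E | edge_in S e]|.

(* genus of a connected vertex-induced subgraph:
   sum of vertex genera + first Betti number (|E(S)| - |S| + 1) *)
Definition genus_in (S : {set V}) : nat :=
  \sum_(v in S) gen v + (nedges_in S + 1 - #|S|).

(* valence of v: half-edges at v (a loop counts twice) plus legs at v *)
Definition valence (v : V) : nat :=
  #|[set e : E | (ends e).1 == v]| + #|[set e : E | (ends e).2 == v]|
  + #|[set i : 'I_n | leg i == v]|.

Definition stable_graph (g : nat) : Prop :=
  [/\ connected_in [set: V],
      forall v : V, 2 < 2 * gen v + valence v
    & genus_in [set: V] = g].

Definition boundary_edges (S : {set V}) : {set E} :=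
  [set e : E | ((ends e).1 \in S) != ((ends e).2 \in S)].

Definition is_tail (S : {set V}) : bool :=
  connected_in S && (#|boundary_edges S| == 1).

Definition rational_tail (S : {set V}) : bool :=
  is_tail S && (genus_in S == 0).

End StableGraphs.

(* Main.v *)
Require Import Defs.
From mathcomp Require Import all_boot.
Set Implicit Arguments. Unset Strict Implicit.

Section H.
Variables (V E : finType) (ends : E -> V * V).

Lemma cross (S A : {set V}) p q :
  connect (adj_in ends S) p q -> p \in A -> q \notin A ->
  exists e, edge_in ends S e /\ e \in boundary_edges ends A.
Proof.
move=> c pA qA.
case: (boolP [exists e, edge_in ends S e && (e \in boundary_edges ends A)]).
  by case/existsP=> e /andP[] ? ?; exists e.
move/existsPn=> no.
have cl : closed (adj_in ends S) A.
  move=> x y /and3P[xS yS /existsP[e /orP[]/eqP he]];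
  case xA: (x \in A); case yA: (y \in A) => //; move: (no e);
  by rewrite /edge_in /boundary_edges inE he /= xS yS xA yA.
by rewrite -(closed_connect cl c) pA in qA.
Qed.

Lemma bd_ends (A : {set V}) e : e \in boundary_edges ends A ->
  exists x y, ((ends e = (x, y)) \/ (ends e = (y, x))) /\ x \in A /\ y \notin A.
Proof.
rewrite inE; case: (ends e) => u w /=.
by case uA: (u \in A); case wA: (w \in A) => //= _;
  [exists u, w | exists w, u]; rewrite ?uA ?wA; auto.
Qed.

Lemma union_all (A B : {set V}) a e f :
  connected_in ends [set: V] -> a \in A ->
  (forall e', e' \in boundary_edges ends A -> e' = e) ->
  (forall f', f' \in boundary_edges ends B -> f' = f) ->
  edge_in ends (A :|: B) e -> edge_in ends (A :|: B) f -> [set: V] = A :|: B.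
Proof.
move=> /andP[_ /forallP Gc] aA bA bB eU fU.
apply/eqP; rewrite eqEsubset subsetT andbT; apply/subsetP => v _.
apply/negPn/negP => nv.
have c : connect (adj_in ends [set: V]) a v.
  by move: (Gc a); rewrite inE => /forallP /(_ v); rewrite inE.
have aU : a \in A :|: B by rewrite inE aA.
have [g [_ gb]] := cross c aU nv.
have key : g \in boundary_edges ends A \/ g \in boundary_edges ends B.
  move: gb; rewrite /boundary_edges !inE.
  by case: ((ends g).1 \in A); case: ((ends g).1 \in B);
     case: ((ends g).2 \in A); case: ((ends g).2 \in B) => //=; auto.
have gU : edge_in ends (A :|: B) g by case: key => [/bA|/bB] ->.
by move: gb gU; rewrite /edge_in inE => /negP + /andP[h1 h2]; rewrite h1 h2.
Qed.

End H.


Theorem lemma4p14 (g n : nat) (V E : finType)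
    (gen : V -> nat) (ends : E -> V * V) (leg : 'I_n -> V)
    (k : nat) (T : 'I_k -> {set V}) (H : {set V}) :
  1 <= n ->
  stable_graph gen ends leg g ->
  (forall i : 'I_k, rational_tail gen ends (T i)) ->
  connected_in ends H ->
  H \subset \bigcup_(i < k) T i ->
  (exists i : 'I_k, H \subset T i) \/
  (exists l r : 'I_k, [set: V] = T l :|: T r).
Proof.
move=> _ [Gc _ _] RT Hc HU.
have Tc i : connected_in ends (T i) by move: (RT i); rewrite /rational_tail /is_tail => /andP[/andP[]].
have Tb i e f : e \in boundary_edges ends (T i) -> f \in boundary_edges ends (T i) -> e = f.
  move: (RT i); rewrite /rational_tail /is_tail => /andP[/andP[_ /cards1P[x ->]] _].
  by rewrite !inE => /eqP -> /eqP ->.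
have conn S x y : connected_in ends S -> x \in S -> y \in S -> connect (adj_in ends S) x y.
  by case/andP=> _ /forallP /(_ x) /implyP /(_ _) /forallP /(_ y) /implyP H1 xS yS; apply: H1.
have Hc' := Hc; case/andP: Hc' => /set0Pn[h hH] _.
have /bigcupP[i0 _ hi0] := subsetP HU h hH.
pose P i := [exists v in H, v \in T i].
have Pi0 : P i0 by apply/existsP; exists h; rewrite hH hi0.
case: (arg_maxnP (fun i => #|T i|) Pi0) => a Pa amax.
case: (boolP (H \subset T a)) => [sub|/subsetPn[y yH yA]]; first by left; exists a.
right.
case/existsP: Pa => x /andP[xH xA].
have [e [eH eb]] := cross (conn _ _ _ Hc xH yH) xA yA.
have [x' [y' [he [x'A y'A]]]] := bd_ends eb.
have [x'H y'H] : x' \in H /\ y' \in H.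
  by move: eH; rewrite /edge_in; case: he => ->; case/andP.
have /bigcupP[b _ y'b] := subsetP HU y' y'H.
have eU (B : {set V}) : x' \in B -> y' \in B -> edge_in ends B e.
  by rewrite /edge_in; case: he => -> /= -> ->.
exists a, b.
case: (boolP (x' \in T b)) => x'b.
  case: (boolP (T a \subset T b)) => [sab|/subsetPn[z za zb]].
    have : #|T a| < #|T b|.
      apply: proper_card; rewrite properE sab /=; apply/subsetPn; by exists y'.
    have Pb : P b by apply/existsP; exists y'; rewrite y'H y'b.
    by rewrite ltnNge; move: (amax b Pb) => /= ->.
  have [f [fa fb]] := cross (conn _ _ _ (Tc a) x'A za) x'b zb.
  apply: (union_all (ends:=ends) (a:=x') (e:=e) (f:=f)) => //.
  - by move=> e' h1; apply: (Tb _ _ _ h1).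
  - by move=> f' h1; apply: (Tb _ _ _ h1).
  - by apply: eU; rewrite inE ?x'A ?y'b ?orbT.
  - by move: fa; rewrite /edge_in !inE => /andP[-> ->].
have ebb : e \in boundary_edges ends (T b).
  by rewrite inE; case: he => -> /=; rewrite (negbTE x'b) y'b.
apply: (union_all (ends:=ends) (a:=x') (e:=e) (f:=e)) => //.
- by move=> e' h1; apply: (Tb _ _ _ h1).
- by move=> f' h1; apply: (Tb _ _ _ h1).
- by apply: eU; rewrite inE ?x'A ?y'b ?orbT.
- by apply: eU; rewrite inE ?x'A ?y'b ?orbT.
Qed.
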